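(* Let $G=\langle a,s,t \mid a^2=1,\ [a,a^t]=1,\ [s,t]=1,\ a^s=aa^t\rangle$. Then in $G$: (i) $[a^{t^i},a^{t^j}]=1$ for all $i,j\in\mathbb Z$; (ii) $[a^{s^i},a^{t^j}]=1$ for all integers $i<0$ and all $j\in\mathbb Z$; (iii) $[a^{s^i},a^{s^j}]=1$ for all integers $i,j<0$.
   Context: Notation: $[x,y]=x^{-1}y^{-1}xy$ and $x^y=y^{-1}xy$. *)

(* Defs.v *)
From Stdlib Require Import ZArith.

Record Group := {
  carrier :> Type;
  gmul : carrier -> carrier -> carrier;
  ginv : carrier -> carrier;
  gone : carrier;
  gmulA : forall x y z, gmul x (gmul y z) = gmul (gmul x y) z;
  gmul1l : forall x, gmul gone x = x;
  gmul1r : forall x, gmul x gone = x;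
  gmulVl : forall x, gmul (ginv x) x = gone;
  gmulVr : forall x, gmul x (ginv x) = gone
}.

Arguments gmul {g} _ _.
Arguments ginv {g} _.
Arguments gone {g}.

Fixpoint npow {G : Group} (x : G) (n : nat) : G :=
  match n with O => gone | S m => gmul x (npow x m) end.

Definition zpow {G : Group} (x : G) (n : Z) : G :=
  match n with
  | Z0 => gone
  | Zpos p => npow x (Pos.to_nat p)
  | Zneg p => npow (ginv x) (Pos.to_nat p)
  end.

Definition conj {G : Group} (x y : G) : G := gmul (ginv y) (gmul x y).

Definition comm {G : Group} (x y : G) : G :=
  gmul (ginv x) (gmul (ginv y) (gmul x y)).

(* Main.v *)
Require Import Defs.
From Stdlib Require Import ZArith Lia.

Definition commute {G : Group} (x y : G) := gmul x y = gmul y x.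

Lemma mulKV {G : Group} (x y : G) : gmul (ginv x) (gmul x y) = y.
Proof. rewrite gmulA, gmulVl, gmul1l; reflexivity. Qed.
Lemma mulVK {G : Group} (x y : G) : gmul x (gmul (ginv x) y) = y.
Proof. rewrite gmulA, gmulVr, gmul1l; reflexivity. Qed.

Lemma inv_unique {G : Group} (x y : G) : gmul x y = gone -> y = ginv x.
Proof. intro H. rewrite <- (mulKV x y), H, gmul1r. reflexivity. Qed.

Lemma inv_mul {G : Group} (x y : G) : ginv (gmul x y) = gmul (ginv y) (ginv x).
Proof. symmetry. apply inv_unique. rewrite <- gmulA, mulVK, gmulVr. reflexivity. Qed.

Lemma inv_one {G : Group} : ginv (@gone G) = gone.
Proof. symmetry. apply inv_unique. apply gmul1l. Qed.

Lemma conj_mul {G : Group} (x y z : G) : conj (gmul x y) z = gmul (conj x z) (conj y z).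
Proof. unfold conj. rewrite <- !gmulA, mulVK. reflexivity. Qed.

Lemma conj_comp {G : Group} (x y z : G) : conj (conj x y) z = conj x (gmul y z).
Proof. unfold conj. rewrite inv_mul, <- !gmulA. reflexivity. Qed.

Lemma conj1 {G : Group} (x : G) : conj x gone = x.
Proof. unfold conj. rewrite inv_one, gmul1l, gmul1r. reflexivity. Qed.

Lemma conj_inj {G : Group} (x y z : G) : conj x z = conj y z -> x = y.
Proof.
  intro H. assert (E: forall w : G, w = gmul z (gmul (conj w z) (ginv z))).
  { intro w. unfold conj. rewrite <- !gmulA, gmulVr, gmul1r, mulVK. reflexivity. }
  rewrite (E x), (E y), H. reflexivity.
Qed.

Lemma commute_conj {G : Group} (x y z : G) :
  commute x y -> commute (conj x z) (conj y z).
Proof. unfold commute. intro H. rewrite <- !conj_mul, H. reflexivity. Qed.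

Lemma commute_conj_inv {G : Group} (x y z : G) :
  commute (conj x z) (conj y z) -> commute x y.
Proof. unfold commute. intro H. rewrite <- !conj_mul in H. eapply conj_inj. exact H. Qed.

Lemma commute_sym {G : Group} (x y : G) : commute x y -> commute y x.
Proof. unfold commute. auto. Qed.

Lemma commute_mul {G : Group} (x y z : G) :
  commute x y -> commute x z -> commute x (gmul y z).
Proof. unfold commute. intros H1 H2. rewrite gmulA, H1, <- gmulA, H2, gmulA. reflexivity. Qed.

Lemma commute_refl {G : Group} (x : G) : commute x x.
Proof. reflexivity. Qed.

Lemma commute_inv {G : Group} (x y : G) : commute x y -> commute x (ginv y).
Proof.
  unfold commute. intro H.
  assert (E: gmul (ginv y) (gmul (gmul x y) (ginv y)) = gmul (ginv y) (gmul (gmul y x) (ginv y)))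
    by (rewrite H; reflexivity).
  rewrite <- !gmulA, mulKV, gmulVr, gmul1r in E. auto.
Qed.

Lemma commute_npow {G : Group} (x y : G) n : commute x y -> commute x (npow y n).
Proof.
  intro H. induction n; simpl. unfold commute; rewrite gmul1l, gmul1r; reflexivity.
  apply commute_mul; auto.
Qed.

Lemma commute_zpow {G : Group} (x y : G) n : commute x y -> commute x (zpow y n).
Proof.
  intro H. destruct n; simpl.
  unfold commute; rewrite gmul1l, gmul1r; reflexivity.
  apply commute_npow; auto. apply commute_npow, commute_inv; auto.
Qed.

Lemma comm_iff {G : Group} (x y : G) : comm x y = gone <-> commute x y.
Proof.
  unfold comm, commute. split; intro H.
  - transitivity (gmul y (gmul x (gmul (ginv x) (gmul (ginv y) (gmul x y))))).
    + rewrite !mulVK. reflexivity.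
    + rewrite H, gmul1r. reflexivity.
  - rewrite H, mulKV, gmulVl. reflexivity.
Qed.

Lemma npow_add {G : Group} (x : G) m n : npow x (m + n) = gmul (npow x m) (npow x n).
Proof. induction m; simpl. rewrite gmul1l; reflexivity. rewrite IHm, gmulA; reflexivity. Qed.

Lemma npow_inv_cancel {G : Group} (x : G) n : gmul (npow (ginv x) n) (npow x n) = gone.
Proof.
  induction n. simpl; apply gmul1l.
  replace (npow x (S n)) with (gmul (npow x n) x).
  2:{ replace (S n) with (n + 1) by lia. rewrite npow_add. simpl. rewrite gmul1r. reflexivity. }
  simpl. rewrite <- gmulA, (gmulA _ _ (npow x n)), IHn, gmul1l, gmulVl. reflexivity.
Qed.

Lemma zpow_of_nat {G : Group} (x : G) n : zpow x (Z.of_nat n) = npow x n.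
Proof. destruct n. reflexivity. simpl. rewrite SuccNat2Pos.id_succ. reflexivity. Qed.

Lemma zpow_of_nat_neg {G : Group} (x : G) n : zpow x (- Z.of_nat n) = npow (ginv x) n.
Proof. destruct n. reflexivity. simpl. rewrite SuccNat2Pos.id_succ. reflexivity. Qed.

Lemma zpow_succ {G : Group} (x : G) m : zpow x (m + 1) = gmul x (zpow x m).
Proof.
  destruct (Z_le_gt_dec 0 m) as [Hm|Hm].
  - replace m with (Z.of_nat (Z.to_nat m)) by lia.
    replace (Z.of_nat (Z.to_nat m) + 1)%Z with (Z.of_nat (S (Z.to_nat m))) by lia.
    rewrite !zpow_of_nat. reflexivity.
  - replace m with (- Z.of_nat (S (Z.to_nat (- m - 1))))%Z by lia.
    replace (- Z.of_nat (S (Z.to_nat (- m - 1))) + 1)%Z with (- Z.of_nat (Z.to_nat (- m - 1)))%Z by lia.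
    rewrite !zpow_of_nat_neg. simpl. rewrite mulVK. reflexivity.
Qed.

Lemma lcancel {G : Group} (u x y : G) : gmul u x = gmul u y -> x = y.
Proof. intro H. rewrite <- (mulKV u x), H, mulKV. reflexivity. Qed.
Lemma rcancel {G : Group} (u x y : G) : gmul x u = gmul y u -> x = y.
Proof.
  intro H. assert (E: gmul (gmul x u) (ginv u) = gmul (gmul y u) (ginv u)) by (rewrite H; reflexivity).
  rewrite <- !gmulA, gmulVr, !gmul1r in E. exact E.
Qed.
Lemma commute_mul_inv_r {G : Group} (w u v : G) :
  commute w u -> commute w (gmul u v) -> commute w v.
Proof.
  unfold commute. intros H1 H2. apply (lcancel u).
  rewrite gmulA, <- H1, <- gmulA, H2, gmulA. reflexivity.
Qed.
Lemma commute_mul_inv_l {G : Group} (x y v : G) :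
  commute y v -> commute (gmul x y) v -> commute x v.
Proof.
  unfold commute. intros H1 H2. apply (rcancel y).
  rewrite <- gmulA, <- H1, gmulA, H2, gmulA. reflexivity.
Qed.

Theorem mainTheorem2 :
  forall (H : Group) (a s t : H),
    gmul a a = gone ->
    comm a (conj a t) = gone ->
    comm s t = gone ->
    conj a s = gmul a (conj a t) ->
    (forall i j : Z, comm (conj a (zpow t i)) (conj a (zpow t j)) = gone) /\
    (forall i j : Z, (i < 0)%Z ->
       comm (conj a (zpow s i)) (conj a (zpow t j)) = gone) /\
    (forall i j : Z, (i < 0)%Z -> (j < 0)%Z ->
       comm (conj a (zpow s i)) (conj a (zpow s j)) = gone).
Proof.
  intros H a s t Ha2 Hat Hst Has.
  apply comm_iff in Hat. apply comm_iff in Hst.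
  set (A := fun j => conj a (zpow t j)).
  assert (Asucc : forall j, A (j + 1)%Z = conj (conj a t) (zpow t j)).
  { intro j. unfold A. rewrite conj_comp, zpow_succ. reflexivity. }
  assert (AS : forall j, conj (A j) s = gmul (A j) (A (j + 1)%Z)).
  { intro j. unfold A at 1. rewrite conj_comp.
    assert (C : commute s (zpow t j)) by (apply commute_zpow; auto).
    unfold commute in C. rewrite <- C, <- conj_comp, Has, conj_mul, Asucc. reflexivity. }
  assert (A1 : forall m, commute (A m) (A (m + 1)%Z)).
  { intro m. rewrite Asucc. unfold A. apply commute_conj. auto. }
  assert (P : forall n m, commute (A m) (A (m + Z.of_nat n)%Z) /\
                          commute (A m) (A (m + Z.of_nat (S n))%Z)).
  { induction n; intro m.
    - split. replace (m + Z.of_nat 0)%Z with m by lia. apply commute_refl.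
      replace (m + Z.of_nat 1)%Z with (m + 1)%Z by lia. apply A1.
    - split. apply (IHn m).
      set (k := (m + Z.of_nat (S (S n)))%Z).
      assert (E1 : commute (A m) (A (m + Z.of_nat (S n))%Z)) by apply (IHn m).
      assert (E2 : commute (A (m+1)%Z) (A (m + Z.of_nat (S n))%Z)).
      { replace (m + Z.of_nat (S n))%Z with (m + 1 + Z.of_nat n)%Z by lia. apply IHn. }
      assert (E3 : commute (A (m+1)%Z) (A k)).
      { unfold k. replace (m + Z.of_nat (S (S n)))%Z with (m + 1 + Z.of_nat (S n))%Z by lia. apply IHn. }
      assert (E4 := commute_conj _ _ s E1).
      rewrite !AS in E4.
      replace (m + Z.of_nat (S n) + 1)%Z with k in E4 by (unfold k; lia).
      set (x := A m) in *. set (y := A (m+1)%Z) in *.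
      set (u := A (m + Z.of_nat (S n))%Z) in *. set (v := A k) in *.
      assert (Cxy : commute x y) by apply A1.
      assert (Cxyu : commute (gmul x y) u).
      { apply commute_sym, commute_mul; apply commute_sym; auto. }
      assert (Cxyv : commute (gmul x y) v) by (eapply commute_mul_inv_r; eauto).
      apply (commute_mul_inv_l x y v); assumption. }
  assert (Pz : forall i j, commute (A i) (A j)).
  { intros i j. destruct (Z_le_gt_dec i j).
    - replace j with (i + Z.of_nat (Z.to_nat (j - i)))%Z by lia. apply P.
    - apply commute_sym. replace i with (j + Z.of_nat (Z.to_nat (i - j)))%Z by lia. apply P. }
  assert (Q : forall n j k, commute (A k) (conj (A j) (npow s n))).
  { induction n; intros j k.
    - simpl. rewrite conj1. apply Pz.
    - simpl. rewrite <- conj_comp, AS, conj_mul. apply commute_mul; auto. }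
  assert (A0 : A 0%Z = a) by (unfold A; simpl; apply conj1).
  assert (R : forall p j, commute (conj a (npow (ginv s) p)) (A j)).
  { intros p j. apply (commute_conj_inv _ _ (npow s p)).
    rewrite conj_comp, npow_inv_cancel, conj1, <- A0. apply Q. }
  assert (T : forall p q, commute (conj a (npow (ginv s) (p + q))) (conj a (npow (ginv s) q))).
  { intros p q. apply (commute_conj_inv _ _ (npow s q)).
    rewrite !conj_comp, npow_add, <- gmulA, npow_inv_cancel, gmul1r, conj1.
    pose proof (R p 0%Z) as Hr; rewrite A0 in Hr; exact Hr. }
  split; [|split].
  - intros i j. apply comm_iff, Pz.
  - intros i j Hi. destruct i; try lia. simpl zpow. apply comm_iff, R.
  - intros i j Hi Hj. destruct i as [|p|p]; try lia. destruct j as [|q|q]; try lia.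
    simpl zpow. apply comm_iff.
    destruct (Nat.le_gt_cases (Pos.to_nat q) (Pos.to_nat p)).
    + replace (Pos.to_nat p) with ((Pos.to_nat p - Pos.to_nat q) + Pos.to_nat q) by lia. apply T.
    + apply commute_sym.
      replace (Pos.to_nat q) with ((Pos.to_nat q - Pos.to_nat p) + Pos.to_nat p) by lia. apply T.
Qed.
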